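(* Let $n,\Delta>0$ be integers and $\mu,\eta$ positive reals. Let $V$ be a set of size $n$ and $\mathcal{B}\subseteq\binom{V}{\Delta}$ a family of $\Delta$-sets with $|\mathcal{B}|\le\mu n^\Delta$. Then at most $(\Delta!/\eta^{\Delta-1})\mu n$ vertices of $V$ are $\eta n$-corrupted by $\mathcal{B}$.
   Context: For $\mathcal{B}\subseteq\binom{V}{\Delta}$ and a real $x>0$: every $B\in\mathcal{B}$ is called $x$-corrupted by $\mathcal{B}$; recursively, for $i=\Delta-1,\Delta-2,\dots,1$, an $i$-set $B\subseteq V$ is $x$-corrupted by $\mathcal{B}$ if it is contained in more than $x$ of the $(i+1)$-sets that are $x$-corrupted by $\mathcal{B}$. A vertex $v$ is $x$-corrupted if the $1$-set $\{v\}$ is. *)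

(* Defs.v *)
From mathcomp Require Import all_boot all_order all_algebra.
Set Implicit Arguments. Unset Strict Implicit. Unset Printing Implicit Defensive.
Import Order.TTheory GRing.Theory Num.Theory.
Local Open Scope ring_scope.

(* corrupted_level B D x k = the family of (D - k)-sets that are x-corrupted
   by B, for k = 0, ..., D - 1.  Level 0 is B itself; an (i)-set S is
   x-corrupted if it is contained in more than x of the x-corrupted
   (i+1)-sets. *)
Fixpoint corrupted_level (R : realFieldType) (V : finType)
    (B : {set {set V}}) (D : nat) (x : R) (k : nat) : {set {set V}} :=
  match k with
  | 0 => B
  | k'.+1 =>
      [set S : {set V} | (#|S| == D - k'.+1)%N &
         x < (#|[set T in corrupted_level B D x k' | S \subset T]|)%:R]
  end.

Definition corrupted_vertex (R : realFieldType) (V : finType)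
    (B : {set {set V}}) (D : nat) (x : R) (v : V) : bool :=
  [set v] \in corrupted_level B D x (D - 1).

(* Main.v *)
Require Import Defs.
From mathcomp Require Import all_boot all_order all_algebra.
From mathcomp Require Import zify ring.
Import Order.TTheory GRing.Theory Num.Theory.
Local Open Scope ring_scope.

Lemma subsets_pred (V : finType) (T : {set V}) (m : nat) :
  (#|T| = m.+1)%N ->
  (#|[set S : {set V} | S \subset T & #|S| == m]| <= #|T|)%N.
Proof.
move=> hT.
apply: leq_trans (leq_imset_card (fun x => T :\ x) T).
apply: subset_leq_card; apply/subsetP => S; rewrite inE => /andP[sST /eqP hS].
have: #|T :\: S| == 1%N by rewrite cardsDS // hT hS subSnn.
case/cards1P => x hx.
have xT : x \in T by move: (set11 x); rewrite -hx inE => /andP[].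
have xS : x \notin S by move: (set11 x); rewrite -hx inE => /andP[].
apply/imsetP; exists x => //; apply/eqP; rewrite eqEcard; apply/andP; split.
  apply/subsetP => y yS; rewrite !inE (subsetP sST y yS) andbT; apply/eqP => yx; move: xS; by rewrite -yx yS.
by move: hT; rewrite (cardsD1 x T) xT hS add1n => -[->].
Qed.

Section S.
Variables (R : realFieldType) (V : finType) (B : {set {set V}}) (D : nat) (x : R).
Hypothesis hB : forall S, S \in B -> #|S| = D.
Local Notation L := (corrupted_level B D x).

Lemma level_size k S : (k < D)%N -> S \in L k -> #|S| = (D - k)%N.
Proof.
case: k => [|k] _ /=; first by rewrite subn0; exact: hB.
by rewrite inE => /andP[/eqP].
Qed.

Lemma pairs_le k : (k.+1 < D)%N ->
  (\sum_(S in L k.+1) #|[set T in L k | S \subset T]| <= (D - k) * #|L k|)%N.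
Proof.
move=> hk.
have -> : (\sum_(S in L k.+1) #|[set T in L k | S \subset T]|
   = \sum_(S in L k.+1) \sum_(T in L k) (if S \subset T then 1 else 0))%N.
  apply: eq_bigr => S _; rewrite -big_mkcondr -sum1_card.
  by apply: eq_bigl => T; rewrite inE.
rewrite exchange_big /= -sum1_card big_distrr /=.
apply: leq_sum => T hT; rewrite muln1 -big_mkcondr /=.
have hT' := @level_size _ _ (ltnW hk) hT.
rewrite -{1}hT'; rewrite -(subnSK (ltnW hk)) in hT'.
apply: leq_trans _ (@subsets_pred _ _ _ hT'). rewrite (eq_bigl (mem [set S in L k.+1 | S \subset T])); last by move=> S /=; rewrite !inE. rewrite sum1_card.
apply: subset_leq_card; apply/subsetP => S; rewrite !inE => /andP[/andP[hS _] ->].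
by [].
Qed.
End S.

Section T.
Variables (R : realFieldType) (V : finType) (B : {set {set V}}) (D : nat) (x : R).
Hypothesis hB : forall S, S \in B -> #|S| = D.
Hypothesis hx : 0 <= x.
Local Notation L := (corrupted_level B D x).

Lemma step k : (k.+1 < D)%N ->
  x * (#|L k.+1|)%:R <= ((D - k) * #|L k|)%:R.
Proof.
move=> hk; apply: le_trans (_ : (\sum_(S in L k.+1) #|[set T in L k | S \subset T]|)%:R <= _); last first.
  by rewrite ler_nat; apply: pairs_le.
rewrite natr_sum -sum1_card natr_sum mulr_sumr; apply: ler_sum => S.
rewrite [in X in X -> _]/= inE => /andP[_ /ltW]; by rewrite mulr1.
Qed.

Lemma bound k : (k < D)%N ->
  x ^+ k * (#|L k|)%:R * ((D - k)`!)%:R <= (D`!)%:R * (#|B|)%:R.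
Proof.
elim: k => [|k IH] hk; first by rewrite expr0 mul1r subn0 mulrC.
have hk' : (k < D)%N by apply: ltnW.
apply: le_trans (IH hk').
have hf : (D - k)`! = ((D - k) * (D - k.+1)`!)%N by rewrite -(subnSK hk') factS.
rewrite hf natrM.
set a := #|L k.+1|%:R; set b := #|L k|%:R; set f := (D - k.+1)`!%:R.
have -> : x ^+ k.+1 * a * f = x ^+ k * ((x * a) * f) by rewrite exprS; ring.
have -> : x ^+ k * b * ((D - k)%:R * f) = x ^+ k * (((D - k) * #|L k|)%:R * f).
  by rewrite natrM /b; ring.
rewrite ler_wpM2l ?exprn_ge0 // ler_wpM2r ?ler0n //; exact: step.
Qed.
End T.

Theorem lemma11p7 (R : realFieldType) (V : finType) (n D : nat)
    (mu eta : R) (B : {set {set V}}) :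
  (0 < n)%N -> (0 < D)%N -> 0 < mu -> 0 < eta ->
  #|V| = n ->
  (forall S, S \in B -> #|S| = D) ->
  (#|B|)%:R <= mu * (n%:R) ^+ D ->
  (#|[set v : V | corrupted_vertex B D (eta * n%:R) v]|)%:R
    <= ((D`!)%:R / eta ^+ (D - 1)) * mu * n%:R.
Proof.
move=> n0 D0 mu0 eta0 hV hB hBmu.
set x := eta * n%:R.
have n0R : (0 : R) < n%:R by rewrite ltr0n.
have x0 : 0 < x by rewrite mulr_gt0.
set c := #|[set v : V | corrupted_vertex B D x v]|.
have hc : (c <= #|corrupted_level B D x (D - 1)|)%N.
  rewrite /c -(card_imset _ (@set1_inj V)); apply: subset_leq_card.
  by apply/subsetP => y /imsetP[v]; rewrite inE /corrupted_vertex => h ->.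
have hD : (D - 1 < D)%N by lia.
have hb := @bound R V B D x hB (ltW x0) (D - 1) hD.
move: hb; rewrite subKn // (_ : 1`! = 1%N) // mulr1 => hb.
have key : x ^+ (D - 1) * c%:R <= (D`!)%:R * (mu * n%:R ^+ D).
  apply: le_trans (le_trans _ hb) _.
    by apply: ler_wpM2l; [exact: exprn_ge0 (ltW x0) | rewrite ler_nat].
  by apply: ler_wpM2l; rewrite ?ler0n.
have e0 : 0 < eta ^+ (D - 1) by rewrite exprn_gt0.
have N0 : 0 < n%:R ^+ (D - 1) :> R by rewrite exprn_gt0.
have eN0 : 0 < eta ^+ (D - 1) * n%:R ^+ (D - 1) by rewrite mulr_gt0.
rewrite -(ler_pM2r eN0).
have hnD : n%:R ^+ D = n%:R ^+ (D - 1) * n%:R :> R by rewrite -exprSr subn1 prednK.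
have -> : D`!%:R / eta ^+ (D - 1) * mu * n%:R * (eta ^+ (D - 1) * n%:R ^+ (D - 1))
   = D`!%:R * (mu * n%:R ^+ D).
  rewrite hnD; field; exact: lt0r_neq0.
move: key; rewrite /x exprMn.
have -> : c%:R * (eta ^+ (D - 1) * n%:R ^+ (D - 1)) = eta ^+ (D - 1) * n%:R ^+ (D - 1) * c%:R :> R by ring.
done.
Qed.
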